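(* Let $g$ be a $1$-Lipschitz function on $\mathbb R$ supported on $[0,1]$, $N$ a positive integer, $L>0$, $\alpha\in(0,1]$ and $M>0$. For $\varepsilon=(\varepsilon_1,\ldots,\varepsilon_{2^N})\in\{-1,1\}^{2^N}$ define $G_\varepsilon(x)=L\sum_{k=0}^{2^N-1}\varepsilon_{k+1}\,g(2^Nx-k)$ for $x\in[0,1]$. If $L\le2^{-[(N-1)\alpha+1]}M$, then for every $\varepsilon\in\{-1,1\}^{2^N}$, $|G_\varepsilon(x)-G_\varepsilon(y)|\le M|x-y|^\alpha$ for all $x,y\in[0,1]$. *)

(* Defs.v *)
From Stdlib Require Import Reals.
Open Scope R_scope.

Definition lipschitz1 (g : R -> R) : Prop :=
  forall x y, Rabs (g x - g y) <= Rabs (x - y).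

Definition supported_01 (g : R -> R) : Prop :=
  forall x, (x < 0 \/ 1 < x) -> g x = 0.

Definition sign_vector (N : nat) (eps : nat -> R) : Prop :=
  forall k, (1 <= k <= 2 ^ N)%nat -> eps k = 1 \/ eps k = -1.

Definition G_eps (g : R -> R) (N : nat) (L : R) (eps : nat -> R) (x : R) : R :=
  L * sum_f_R0 (fun k => eps (S k) * g (2 ^ N * x - INR k)) (2 ^ N - 1).

(* Main.v *)
Require Import Defs.
From Stdlib Require Import Reals Lra Lia.
Open Scope R_scope.

Ltac rabs_elim :=
  repeat match goal with
  | |- context[Rabs ?a] =>
      destruct (Rcase_abs a); [rewrite (Rabs_left a) in * by lra | rewrite (Rabs_right a) in * by lra]
  | H : context[Rabs ?a] |- _ =>
      destruct (Rcase_abs a); [rewrite (Rabs_left a) in * by lra | rewrite (Rabs_right a) in * by lra]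
  end.

Lemma g_le_u (g : R -> R) : lipschitz1 g -> supported_01 g ->
  forall u, 0 <= u -> Rabs (g u) <= u.
Proof.
  intros Hl Hs u Hu.
  destruct (Rle_dec (Rabs (g u)) u) as [h|h]; auto.
  exfalso. set (v := -((Rabs (g u) - u)/2)).
  assert (Hv : g v = 0) by (apply Hs; left; unfold v; lra).
  specialize (Hl u v). rewrite Hv, Rminus_0_r in Hl.
  rewrite (Rabs_right (u - v)) in Hl by (unfold v; lra). unfold v in Hl. lra.
Qed.

Lemma g_le_1u (g : R -> R) : lipschitz1 g -> supported_01 g ->
  forall u, u <= 1 -> Rabs (g u) <= 1 - u.
Proof.
  intros Hl Hs u Hu.
  destruct (Rle_dec (Rabs (g u)) (1 - u)) as [h|h]; auto.
  exfalso. set (v := 1 + ((Rabs (g u) - (1 - u))/2)).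
  assert (Hv : g v = 0) by (apply Hs; right; unfold v; lra).
  specialize (Hl u v). rewrite Hv, Rminus_0_r in Hl.
  rewrite (Rabs_left1 (u - v)) in Hl by (unfold v; lra). unfold v in Hl. lra.
Qed.

Lemma g_zero (g : R -> R) : lipschitz1 g -> supported_01 g ->
  forall u, (u <= 0 \/ 1 <= u) -> g u = 0.
Proof.
  intros Hl Hs u [H|H].
  - destruct (Rlt_dec u 0). apply Hs; auto.
    assert (u = 0) by lra. subst. pose proof (g_le_u g Hl Hs 0 (Rle_refl 0)).
    pose proof (Rabs_pos (g 0)). destruct (Rcase_abs (g 0)); [rewrite Rabs_left in * by lra | rewrite Rabs_right in * by lra]; lra.
  - destruct (Rlt_dec 1 u). apply Hs; auto.
    assert (u = 1) by lra. subst. pose proof (g_le_1u g Hl Hs 1 (Rle_refl 1)).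
    pose proof (Rabs_pos (g 1)). destruct (Rcase_abs (g 1)); [rewrite Rabs_left in * by lra | rewrite Rabs_right in * by lra]; lra.
Qed.

Lemma g_half (g : R -> R) : lipschitz1 g -> supported_01 g ->
  forall u, Rabs (g u) <= 1/2.
Proof.
  intros Hl Hs u.
  destruct (Rle_dec u 0). rewrite (g_zero g Hl Hs u) by auto. rewrite Rabs_R0; lra.
  destruct (Rle_dec 1 u). rewrite (g_zero g Hl Hs u) by auto. rewrite Rabs_R0; lra.
  pose proof (g_le_u g Hl Hs u ltac:(lra)). pose proof (g_le_1u g Hl Hs u ltac:(lra)).
  lra.
Qed.

Lemma glue (f1 f2 : R -> R) (c : R) :
  lipschitz1 f1 -> lipschitz1 f2 ->
  (forall t, c <= t -> f1 t = 0) -> (forall t, t <= c -> f2 t = 0) ->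
  lipschitz1 (fun t => f1 t + f2 t).
Proof.
  intros L1 L2 Z1 Z2 s t.
  destruct (Rle_dec s c); destruct (Rle_dec t c).
  - rewrite (Z2 s), (Z2 t) by lra. specialize (L1 s t). rabs_elim; lra.
  - rewrite (Z2 s), (Z1 t) by lra.
    pose proof (L1 s c). pose proof (L2 c t). rewrite (Z1 c) in * by lra.
    rewrite (Z2 c) in * by lra. rabs_elim; lra.
  - rewrite (Z1 s), (Z2 t) by lra.
    pose proof (L1 t c). pose proof (L2 c s). rewrite (Z1 c) in * by lra.
    rewrite (Z2 c) in * by lra. rabs_elim; lra.
  - rewrite (Z1 s), (Z1 t) by lra. specialize (L2 s t). rabs_elim; lra.
Qed.

Definition H (g : R -> R) (e : nat -> R) n t :=
  sum_f_R0 (fun k => e (S k) * g (t - INR k)) n.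

Lemma H_props (g : R -> R) (e : nat -> R) : lipschitz1 g -> supported_01 g ->
  forall n, (forall k, (k <= n)%nat -> e (S k) = 1 \/ e (S k) = -1) ->
  (forall t, INR n + 1 <= t -> H g e n t = 0) /\ lipschitz1 (H g e n) /\
  (forall t, Rabs (H g e n t) <= 1/2).
Proof.
  intros Hl Hs n. induction n as [|n IH]; intros He.
  - unfold H; simpl. destruct (He 0%nat ltac:(lia)) as [E|E]; rewrite E.
    + split; [|split].
      * intros t Ht. rewrite (g_zero g Hl Hs) by lra; ring.
      * intros s t. rewrite !Rmult_1_l. rewrite !Rminus_0_r. apply Hl.
      * intros t. rewrite Rmult_1_l. apply g_half; auto.
    + split; [|split].
      * intros t Ht. rewrite (g_zero g Hl Hs) by lra; ring.
      * intros s t. rewrite !Rminus_0_r. specialize (Hl s t). rabs_elim; lra.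
      * intros t. pose proof (g_half g Hl Hs (t - 0)). rabs_elim; lra.
  - destruct IH as [Z [Lp B]]. intros k Hk; apply He; lia.
    assert (Hn : forall t, H g e (S n) t = H g e n t + e (S (S n)) * g (t - INR (S n)))
      by (intros; reflexivity).
    assert (Ee : e (S (S n)) = 1 \/ e (S (S n)) = -1) by (apply He; lia).
    rewrite S_INR in *.
    split; [|split].
    + intros t Ht. rewrite Hn, Z by lra. rewrite (g_zero g Hl Hs) by lra. ring.
    + intros s t. rewrite !Hn.
      apply (glue (H g e n) (fun t => e (S (S n)) * g (t - (INR n + 1))) (INR n + 1)); auto.
      * intros a b. destruct Ee as [E|E]; rewrite E; specialize (Hl (a - (INR n + 1)) (b - (INR n + 1)));
        rabs_elim; lra.
      * intros a Ha. simpl. rewrite (g_zero g Hl Hs) by lra. ring.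
    + intros t. rewrite Hn. destruct (Rle_dec t (INR n + 1)).
      * rewrite (g_zero g Hl Hs (t - (INR n + 1))) by lra. rewrite Rmult_0_r, Rplus_0_r. apply B.
      * rewrite Z by lra. rewrite Rplus_0_l.
        pose proof (g_half g Hl Hs (t - (INR n + 1))). destruct Ee as [E|E]; rewrite E; rabs_elim; lra.
Qed.

Lemma lnle (a b : R) : 0 < a -> a <= b -> ln a <= ln b.
Proof. intros Ha Hab. destruct (Req_dec a b) as [E|E]. subst; lra.
  left. apply ln_increasing; lra. Qed.

Lemma exple (a b : R) : a <= b -> exp a <= exp b.
Proof. intros Hab. destruct (Req_dec a b) as [E|E]. subst; lra.
  left. apply exp_increasing; lra. Qed.

Lemma ln0 : ln 0 = 0.
Proof. unfold ln. destruct Rlt_dec as [h|h]; [exfalso; exact (Rlt_irrefl 0 h) | reflexivity]. Qed.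

Theorem proposition8 (g : R -> R) (N : nat) (L alpha M : R) :
  lipschitz1 g -> supported_01 g ->
  (0 < N)%nat -> 0 < L -> 0 < alpha <= 1 -> 0 < M ->
  L <= Rpower 2 (- ((INR N - 1) * alpha + 1)) * M ->
  forall eps : nat -> R, sign_vector N eps ->
  forall x y, 0 <= x <= 1 -> 0 <= y <= 1 ->
    Rabs (G_eps g N L eps x - G_eps g N L eps y) <= M * Rpower (Rabs (x - y)) alpha.
Proof.
  intros Hl Hs HN HL Ha HM HLM eps Heps x y Hx Hy.
  assert (P : (0 < 2 ^ N)%nat) by (apply Nat.neq_0_lt_0, Nat.pow_nonzero; lia).
  destruct (H_props g eps Hl Hs (2 ^ N - 1)) as [_ [Lp B]].
  { intros k Hk. apply Heps. lia. }
  assert (E : forall z, G_eps g N L eps z = L * H g eps (2 ^ N - 1) (2 ^ N * z)) by reflexivity.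
  rewrite !E. rewrite <- Rmult_minus_distr_l, Rabs_mult, (Rabs_right L) by lra.
  set (a := 2 ^ N * x). set (b := 2 ^ N * y).
  assert (P2 : 0 < 2 ^ N) by (apply pow_lt; lra).
  assert (Hab : Rabs (a - b) = 2 ^ N * Rabs (x - y)).
  { unfold a, b. rewrite <- Rmult_minus_distr_l, Rabs_mult, (Rabs_right (2 ^ N)) by lra. reflexivity. }
  pose proof (Lp a b) as L1.
  assert (L2 : Rabs (H g eps (2 ^ N - 1) a - H g eps (2 ^ N - 1) b) <= 1).
  { pose proof (B a). pose proof (B b). rabs_elim; lra. }
  destruct (Req_dec (Rabs (x - y)) 0) as [D0|D0].
  - rewrite D0 in *. unfold Rpower. rewrite ln0. rewrite Rmult_0_r, exp_0. rewrite Rmult_0_r in Hab.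
    rewrite Hab in L1. pose proof (Rabs_pos (H g eps (2 ^ N - 1) a - H g eps (2 ^ N - 1) b)). nra.
  - set (d := Rabs (x - y)) in *. assert (Dp : 0 < d) by (pose proof (Rabs_pos (x - y)); unfold d in *; lra).
    set (t := 2 ^ N * d) in *.
    assert (Tp : 0 < t) by (unfold t; nra).
    assert (Key : Rabs (H g eps (2 ^ N - 1) a - H g eps (2 ^ N - 1) b) <= Rpower t alpha).
    { unfold Rpower. destruct (Rle_dec t 1).
      - assert (ln t <= 0). { rewrite <- ln_1. apply lnle; lra. }
        apply Rle_trans with t; [lra|]. rewrite <- (exp_ln t) at 1 by lra.
        apply exple. nra.
      - assert (0 <= ln t). { rewrite <- ln_1. apply lnle; lra. }
        apply Rle_trans with 1; [lra|]. rewrite <- exp_0. apply exple. nra. }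
    assert (Rt : Rpower t alpha = Rpower 2 (INR N * alpha) * Rpower d alpha).
    { unfold t. rewrite <- Rpower_mult_distr by lra. rewrite <- (Rpower_pow N 2) by lra. rewrite Rpower_mult.
      reflexivity. }
    assert (C : L * Rpower 2 (INR N * alpha) <= M).
    { apply Rle_trans with (Rpower 2 (- ((INR N - 1) * alpha + 1)) * M * Rpower 2 (INR N * alpha)).
      - apply Rmult_le_compat_r; auto. unfold Rpower; left; apply exp_pos.
      - unfold Rpower. rewrite (Rmult_comm _ M), Rmult_assoc, <- exp_plus.
        assert (exp (- ((INR N - 1) * alpha + 1) * ln 2 + INR N * alpha * ln 2) <= 1).
        { assert (0 < ln 2) by (rewrite <- ln_1; apply ln_increasing; lra).
          assert (Hq : (alpha - 1) * ln 2 <= 0 * ln 2) by (apply Rmult_le_compat_r; lra). replace (- ((INR N - 1) * alpha + 1) * ln 2 + INR N * alpha * ln 2) with ((alpha - 1) * ln 2) by ring. rewrite <- exp_0 at 2. apply exple. lra. }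
        nra. }
    assert (Dq : 0 < Rpower d alpha) by (unfold Rpower; apply exp_pos).
    rewrite Rt in Key. nra.
Qed.
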